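(* Let $k\le n$ be positive integers and $A\in\mathbb{C}^{n\times n}$ with eigenvalues ordered so that $|\lambda_1(A)|\ge\cdots\ge|\lambda_n(A)|$. Then $$\left|\prod_{i=1}^k\lambda_i(A)\right|\le\left(\frac nk\right)^{k/2}\min\left\{\max_{|\alpha|=k}\prod_{i\in\alpha}\|\mathrm{col}_i(A)\|_2,\ \max_{|\alpha|=k}\prod_{i\in\alpha}\|\mathrm{row}_i(A)\|_2\right\},$$ where the maxima are over subsets $\alpha\subseteq\{1,\ldots,n\}$ with $|\alpha|=k$.
   Context: $\mathrm{col}_i(A)$ is the $i$th column and $\mathrm{row}_i(A)$ the (transposed) $i$th row of $A$; $\|\cdot\|_2$ is the Euclidean norm. *)

(* Defs.v *)
From mathcomp Require Import all_boot all_order all_algebra.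
Set Implicit Arguments. Unset Strict Implicit. Unset Printing Implicit Defensive.
Import Order.TTheory GRing.Theory Num.Theory.
Local Open Scope ring_scope.

(* C is any numeric algebraically closed field (e.g. the complex numbers);
   `|x| is the modulus. *)

Definition eigenseq (C : numClosedFieldType) (n : nat) (A : 'M[C]_n) (s : seq C) :=
  char_poly A = \prod_(x <- s) ('X - x%:P).

Definition modulus_sorted (C : numClosedFieldType) (s : seq C) :=
  sorted (fun x y : C => `|y| <= `|x|) s.

Definition colnorm (C : numClosedFieldType) (n : nat) (A : 'M[C]_n) (j : 'I_n) : C :=
  sqrtC (\sum_(i < n) `|A i j| ^+ 2).
Definition rownorm (C : numClosedFieldType) (n : nat) (A : 'M[C]_n) (i : 'I_n) : C :=
  sqrtC (\sum_(j < n) `|A i j| ^+ 2).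

(* max over subsets alpha of {0..n-1} with |alpha| = k of prod_{i in alpha} f i
   (all values are nonnegative reals, so 0 is a valid neutral element). *)
Definition maxprod (C : numClosedFieldType) (n k : nat) (f : 'I_n -> C) : C :=
  \big[Order.max/0]_(alpha : {set 'I_n} | #|alpha| == k) \prod_(i in alpha) f i.

(* Main.v *)
Require Import Defs.
From mathcomp Require Import all_boot all_order all_algebra.
From mathcomp Require Import fingroup perm.
From mathcomp Require Import ring.
Set Implicit Arguments. Unset Strict Implicit. Unset Printing Implicit Defensive.
Import Order.TTheory GRing.Theory Num.Theory.
Local Open Scope ring_scope.

Module Aux.
Notation conjC := Num.conj.
Local Open Scope sesquilinear_scope.

Section CB.
Variable R : comNzRingType.

Lemma detM_expand k n (X : 'M[R]_(k,n)) (Y : 'M[R]_(n,k)) :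
  \det (X *m Y) = \sum_(f : {ffun 'I_k -> 'I_n})
     (\prod_i X i (f i)) * \det (\matrix_(i,j) Y (f i) j).
Proof.
transitivity (\sum_(s : 'S_k) (-1)^+s * \sum_(f : {ffun 'I_k -> 'I_n})
                 \prod_i (X i (f i) * Y (f i) (s i))).
  apply: eq_bigr => s _; congr (_ * _).
  under eq_bigr do rewrite mxE.
  by rewrite bigA_distr_bigA.
under eq_bigr do rewrite big_distrr.
rewrite exchange_big; apply: eq_bigr => f _ /=.
rewrite /determinant big_distrr; apply: eq_bigr => s _ /=.
rewrite big_split /= mulrCA; congr (_ * _); congr (_ * _).
by apply: eq_bigr => i _; rewrite mxE.
Qed.

Lemma cauchy_binet k n (X : 'M[R]_(k,n)) (Y : 'M[R]_(n,k)) :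
  k`!%:R * \det (X *m Y) = \sum_(f : {ffun 'I_k -> 'I_n})
     \det (\matrix_(i,j) X i (f j)) * \det (\matrix_(i,j) Y (f i) j).
Proof.
have -> : k`!%:R * \det (X *m Y) = \sum_(s : 'S_k) \det (X *m Y).
  by rewrite sumr_const card_Sn mulr_natl.
transitivity (\sum_(s : 'S_k) \sum_(f : {ffun 'I_k -> 'I_n})
   ((-1) ^+ s * \prod_i X i (f (s i))) * \det (\matrix_(i,j) Y (f i) j)).
  apply: eq_bigr => s _; rewrite detM_expand.
  rewrite (reindex (fun f : {ffun 'I_k -> 'I_n} => [ffun i => f (s i)])) /=; last first.
    exists (fun f : {ffun 'I_k -> 'I_n} => [ffun i => f ((s^-1)%g i)]) => f _;
      by apply/ffunP => i; rewrite !ffunE ?permKV ?permK.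
  apply: eq_bigr => f _.
  have -> : \matrix_(i, j) Y ([ffun i0 => f (s i0)] i) j
            = perm_mx s *m \matrix_(i,j) Y (f i) j.
    by rewrite -row_permE; apply/matrixP => i j; rewrite !mxE ffunE.
  rewrite det_mulmx det_perm.
  under eq_bigr do rewrite ffunE.
  by rewrite mulrCA mulrA.
rewrite exchange_big; apply: eq_bigr => f _ /=.
rewrite -big_distrl /=; congr (_ * _).
rewrite /determinant; apply: eq_bigr => s _; congr (_ * _).
by apply: eq_bigr => i _; rewrite mxE.
Qed.
End CB.

Section Schur.
Variable C : numClosedFieldType.

Local Notation "B ^!" :=
  (orthomx conjC (mx_of_hermitian (hermitian1mx _)) B) : matrix_set_scope.

Lemma char_poly_conjV n (S A : 'M[C]_n) : S \in unitmx ->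
  char_poly (S *m A *m invmx S) = char_poly A.
Proof.
move=> Su; rewrite /char_poly /char_poly_mx.
have -> : 'X%:M - map_mx polyC (S *m A *m invmx S) =
   map_mx polyC S *m ('X%:M - map_mx polyC A) *m map_mx polyC (invmx S).
  rewrite !map_mxM mulmxBr mulmxBl mul_mx_scalar -scalemxAl -[in X in _ *: X]map_mxM mulmxV //.
  by rewrite map_mx1 scalemx1 ?mulmxA.
rewrite !det_mulmx !det_map_mx mulrAC -rmorphM -det_mulmx mulmxV //.
by rewrite det1 rmorph1 mul1r.
Qed.


Lemma char_poly_lblock n1 n2 (Aul : 'M[C]_n1) (Adl : 'M[C]_(n2, n1)) (Adr : 'M_n2) :
  char_poly (block_mx Aul 0 Adl Adr) = char_poly Aul * char_poly Adr.
Proof.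
rewrite /char_poly /char_poly_mx map_block_mx map_mx0 (scalar_mx_block n1 n2).
by rewrite opp_block_mx add_block_mx oppr0 addr0 det_lblock.
Qed.

Lemma char_poly_unitary m n (S : 'M[C]_(m, n)) (A : 'M_n) : m = n ->
  S \is unitarymx -> char_poly (S *m A *m S^t*) = char_poly A.
Proof.
move=> e; case: _ / (esym e) in S *; move=> Su.
by rewrite -invmx_unitary // char_poly_conjV // unitarymx_unit.
Qed.

Lemma ordered_schur n (A : 'M[C]_n) (s : seq C) :
  char_poly A = \prod_(x <- s) ('X - x%:P) ->
  exists2 P : 'M[C]_n, P \is unitarymx &
    is_trig_mx (P *m A *m P^t*) /\ (forall i : 'I_n, (P *m A *m P^t*) i i = s`_i).
Proof.
elim: n {-2}n (leqnn n) A s => [|N IHN] n.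
  rewrite leqn0 => /eqP -> A s _.
  exists 1%:M; first by apply/unitarymxP; rewrite trmx1 map_mx1 mulmx1.
  by split; [apply/is_trig_mxP => -[] | move=> -[]].
rewrite leq_eqVlt => /predU1P [->|/IHN//] A s cpA.
have ss : size s = N.+1.
  by have := size_char_poly A; rewrite cpA size_prod_XsubC; case.
case: s ss cpA => [//|a s'] [ss'] cpA.
have : eigenvalue A a.
  by rewrite eigenvalue_root_char cpA big_cons rootM root_XsubC eqxx.
move=> /eigenvalueP [v vA v0].
have vE : (v <= eigenspace A a)%MS by apply/eigenspaceP.
have rv : \rank v = 1%N by rewrite rank_rV v0.
have rvo : \rank v^!%MS = N by rewrite rank_ortho rv subn1.
have Su := schmidt_complete_unitarymx v.
have vSv : schmidt (row_base v) *m A *m (schmidt (row_base v))^t* = a%:M.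
  rewrite (eigenspaceP (_ : (_ <= _ a))%MS); last first.
    by rewrite eqmx_schmidt_free ?row_base_free ?eq_row_base.
  by rewrite -scalemxAl (unitarymxP _) ?scalemx1 ?schmidt_unitarymx ?rank_leq_col.
have vSvo : schmidt (row_base v) *m A *m (schmidt (row_base v^!%MS))^t* = 0.
  rewrite (eigenspaceP (_ : (_ <= _ a))%MS); last first.
    by rewrite eqmx_schmidt_free ?row_base_free ?eq_row_base.
  rewrite -scalemxAl (orthomx1P _) ?scaler0 //.
  by do 2!rewrite eqmx_schmidt_free ?row_base_free ?eq_row_base // orthomx_sym.
move: Su vSv vSvo; rewrite /schmidt_complete.
move: (schmidt (row_base v)) (schmidt (row_base v^!%MS)).
rewrite rv rvo => T1 T2 Su vSv vSvo.
suff [P Pu [Pt Pd]] : exists2 P : 'M[C]_(1 + N, N.+1), P \is unitarymx &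
    is_trig_mx (P *m A *m P^t*) /\ (forall i : 'I_(1 + N), (P *m A *m P^t*) i i = (a :: s')`_i).
  by exists P.
pose S := col_mx T1 T2.
have rA : S *m A *m S^t* = block_mx a%:M 0 (T2 *m A *m T1^t*) (T2 *m A *m T2^t*).
  by rewrite /S mul_col_mx tr_col_mx map_row_mx mul_col_row vSv vSvo.
set A' := T2 *m A *m T2^t* in rA.
have cpA' : char_poly A' = \prod_(x <- s') ('X - x%:P).
  have := @char_poly_unitary (1 + N) _ S A erefl Su.
  rewrite -/S rA char_poly_lblock cpA big_cons.
  rewrite char_poly_trig ?mx11_is_trig // big_ord1 mxE eqxx mulr1n.
  by apply: mulfI; rewrite polyXsubC_eq0.
have [P' P'u [P'trig P'diag]] := IHN N (leqnn N) A' s' cpA'.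
have Bu : block_mx (1%:M : 'M_1) 0 0 P' \is unitarymx.
  apply/unitarymxP; rewrite tr_block_mx map_block_mx mulmx_block.
  rewrite !trmx0 !(@map_mx0 _ _ conjC) !tr_scalar_mx !map_scalar_mx/=.
  rewrite ?conjC1 !(mulmx1, mul1mx, mulmx0, mul0mx, addr0, add0r).
  by rewrite (unitarymxP _) -?scalar_mx_block.
exists (block_mx (1%:M : 'M_1) 0 0 P' *m S); first exact: mul_unitarymx.
have -> : block_mx (1%:M : 'M_1) 0 0 P' *m S *m A *m (block_mx 1%:M 0 0 P' *m S)^t*
   = block_mx (1%:M : 'M_1) 0 0 P' *m (S *m A *m S^t*) *m (block_mx 1%:M 0 0 P')^t*.
  by rewrite trmx_mul map_mxM !mulmxA.
rewrite rA tr_block_mx map_block_mx !mulmx_block.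
rewrite !trmx0 !(@map_mx0 _ _ conjC) !tr_scalar_mx !map_scalar_mx/= ?conjC1.
rewrite !(mulmx1, mul1mx, mulmx0, mul0mx, addr0, add0r).
split.
  by rewrite is_trig_block_mx // eqxx mx11_is_trig P'trig.
move=> i; case: (split_ordP i) => j ->.
  by rewrite block_mxEul ord1 mxE.
by rewrite block_mxEdr P'diag.
Qed.

End Schur.

Section Ana.
Variable C : numClosedFieldType.

Lemma CS (I : finType) (x y : I -> C) :
  (forall i, x i \is Num.real) -> (forall i, y i \is Num.real) ->
  (\sum_i x i * y i) ^+ 2 <= (\sum_i x i ^+ 2) * (\sum_i y i ^+ 2).
Proof.
move=> xr yr.
have H : \sum_i \sum_j (x i * y j - x j * y i) ^+ 2 =
   ((\sum_i x i ^+ 2) * (\sum_i y i ^+ 2) - (\sum_i x i * y i) ^+ 2) *+ 2.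
  transitivity (\sum_i \sum_j ((x i ^+ 2 * y j ^+ 2 + x j ^+ 2 * y i ^+ 2)
                    - (x i * y i) * (x j * y j) *+ 2)).
    by apply: eq_bigr => i _; apply: eq_bigr => j _; ring.
  under eq_bigr do rewrite sumrB big_split /=.
  rewrite sumrB big_split /=.
  have E1 : \sum_i \sum_j x i ^+ 2 * y j ^+ 2 =
            (\sum_i x i ^+ 2) * (\sum_i y i ^+ 2).
    by rewrite mulr_suml; apply: eq_bigr => i _; rewrite mulr_sumr.
  have E2 : \sum_i \sum_j x j ^+ 2 * y i ^+ 2 =
            (\sum_i x i ^+ 2) * (\sum_i y i ^+ 2).
    by rewrite exchange_big E1.
  have E3 : \sum_i \sum_j (x i * y i) * (x j * y j) *+ 2 =
            (\sum_i x i * y i) ^+ 2 *+ 2.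
    rewrite expr2 mulr_suml -sumrMnl; apply: eq_bigr => i _.
    by rewrite mulr_sumr -sumrMnl.
  rewrite E1 E2 E3.
  by rewrite !mulr2n; ring.
have : 0 <= ((\sum_i x i ^+ 2) * (\sum_i y i ^+ 2) - (\sum_i x i * y i) ^+ 2) *+ 2.
  rewrite -H; apply: sumr_ge0 => i _; apply: sumr_ge0 => j _.
  by apply: real_exprn_even_ge0 => //; rewrite realB ?realM.
by rewrite -mulr_natl pmulr_rge0 ?ltr0n // subr_ge0.
Qed.

Lemma max_ge0 (x y : C) : 0 <= x -> 0 <= y ->
  [/\ 0 <= Order.max x y, x <= Order.max x y & y <= Order.max x y].
Proof.
move=> x0 y0; rewrite /Order.max; case: ifP => h.
  by split => //; apply: ltW.
split => //; rewrite real_leNgt ?h // ger0_real //.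
Qed.

Lemma bigmax_seq (I : eqType) (r : seq I) (P : pred I) (F : I -> C) :
  (forall i, P i -> 0 <= F i) ->
  0 <= \big[Order.max/0]_(i <- r | P i) F i /\
  (forall j, j \in r -> P j -> F j <= \big[Order.max/0]_(i <- r | P i) F i).
Proof.
move=> F0; elim: r => [|a r [IH0 IH]]; first by rewrite big_nil.
rewrite big_cons; case: ifP => Pa; last first.
  split => // j; rewrite in_cons => /orP [/eqP -> | /IH //]; by rewrite Pa.
have [m0 m1 m2] := max_ge0 (F0 a Pa) IH0.
split => // j; rewrite in_cons => /orP [/eqP -> //| jr Pj].
exact: le_trans (IH j jr Pj) m2.
Qed.

Lemma bigmax_fin (I : finType) (P : pred I) (F : I -> C) :
  (forall i, P i -> 0 <= F i) ->
  0 <= \big[Order.max/0]_(i | P i) F i /\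
  (forall j, P j -> F j <= \big[Order.max/0]_(i | P i) F i).
Proof.
move=> F0; have [h0 h1] := bigmax_seq (index_enum I) F0.
by split => // j; apply: h1; rewrite mem_index_enum.
Qed.

Lemma mxnorm2E m n (b : 'M[C]_(m, n)) i :
  (b *m b^t*) i i = \sum_j `|b i j| ^+ 2.
Proof. by rewrite mxE; apply: eq_bigr => j _; rewrite !mxE normCK. Qed.

Lemma bessel k n (U : 'M[C]_(k, n)) (b : 'rV[C]_n) : U *m U^t* = 1%:M ->
  \sum_l `|(b *m U^t*) 0 l| ^+ 2 <= \sum_j `|b 0 j| ^+ 2.
Proof.
move=> Uu; set c := b *m U^t*.
have e : (b - c *m U) *m (b - c *m U)^t* = b *m b^t* - c *m c^t*.
  have ct : c^t* = U *m b^t* by rewrite /c trmx_mul map_mxM trmxCK.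
  have t1 : b *m (U^t* *m c^t*) = c *m c^t* by rewrite mulmxA.
  have t2 : c *m U *m b^t* = c *m c^t* by rewrite ct mulmxA.
  have t3 : c *m U *m (U^t* *m c^t*) = c *m c^t*.
    by rewrite mulmxA -(mulmxA c) Uu mulmx1.
  clearbody c.
  have tB : (b - c *m U)^t* = b^t* - U^t* *m c^t*.
    have -> : U^t* *m c^t* = (c *m U)^t* by rewrite trmx_mul map_mxM.
    by apply/matrixP => i j; rewrite !mxE rmorphB.
  rewrite tB mulmxBl !mulmxBr t1 t2 t3.
  by rewrite subrr subr0.
rewrite -!mxnorm2E -subr_ge0.
have <- : (b *m b^t* - c *m c^t*) 0 0 = (b *m b^t*) 0 0 - (c *m c^t*) 0 0.
  by rewrite !mxE.
by rewrite -e mxnorm2E sumr_ge0 // => j _; rewrite exprn_ge0.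
Qed.

Lemma det_AGM k n (Z : 'M[C]_(n, k)) : (0 < k)%N ->
  \det (Z^t* *m Z) <= (\tr (Z^t* *m Z) / k%:R) ^+ k.
Proof.
move=> k0; set H := Z^t* *m Z.
have [P Pu] := Schur H k0; rewrite /similar_to conjymx // => Ht.
set G := P *m H *m P^t* in Ht.
have PtP : P^t* *m P = 1%:M.
  by have /unitarymxP := (etrans (trmxC_unitary P) Pu); rewrite trmxCK.
have dG : \det H = \det G.
  rewrite /G !det_mulmx mulrAC -det_mulmx (unitarymxP Pu) det1 mul1r //.
have tG : \tr H = \tr G.
  by rewrite /G [RHS]mxtrace_mulC mulmxA PtP mul1mx.
have G0 : forall i, 0 <= G i i.
  move=> i; have -> : G = (Z *m P^t*)^t* *m (Z *m P^t*).
    by rewrite /G /H trmx_mul map_mxM trmxCK !mulmxA.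
  rewrite mxE sumr_ge0 // => j _; rewrite !mxE mulrC; exact: mul_conjC_ge0.
rewrite dG tG (det_trig Ht) /mxtrace.
have := leif_AGM (A := [pred _ : 'I_k | true]) (E := fun i => G i i) (fun i _ => G0 i).
move=> /(fun h => h.1).
have -> : #|[pred _ : 'I_k | true]| = k by rewrite cardT size_enum_ord.
by rewrite !big_mkcond.
Qed.

End Ana.

Section Main.
Variable C : numClosedFieldType.

Definition colsub k n (X : 'M[C]_(k, n)) (f : {ffun 'I_k -> 'I_n}) : 'M[C]_k :=
  \matrix_(i, j) X i (f j).
Definition rowsub' n k (Y : 'M[C]_(n, k)) (f : {ffun 'I_k -> 'I_n}) : 'M[C]_k :=
  \matrix_(i, j) Y (f i) j.

Lemma sum_sqr_det_U k n (U : 'M[C]_(k, n)) : U *m U^t* = 1%:M ->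
  \sum_(f : {ffun 'I_k -> 'I_n}) `|\det (colsub U f)| ^+ 2 = k`!%:R.
Proof.
move=> Uu; have := @cauchy_binet _ k n U (U^t*); rewrite Uu det1 mulr1 => ->.
apply: eq_bigr => f _; rewrite normCK; congr (_ * _).
have -> : \matrix_(i, j) (U^t*) (f i) j = (colsub U f)^t*.
  by apply/matrixP => i j; rewrite !mxE.
by rewrite det_map_mx det_tr.
Qed.

Lemma sum_sqr_det_W k n (W : 'M[C]_(n, k)) :
  \sum_(f : {ffun 'I_k -> 'I_n}) `|\det (rowsub' W f)| ^+ 2 =
  k`!%:R * \det (W^t* *m W).
Proof.
rewrite cauchy_binet; apply: eq_bigr => f _; rewrite normCKC; congr (_ * _).
have -> : \matrix_(i, j) (W^t*) i (f j) = (rowsub' W f)^t*.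
  by apply/matrixP => i j; rewrite !mxE.
by rewrite det_map_mx det_tr.
Qed.


Lemma rownorm_ge0 n (A : 'M[C]_n) i : 0 <= rownorm A i.
Proof. by rewrite /rownorm sqrtC_ge0 sumr_ge0 // => j _; rewrite exprn_ge0. Qed.

Lemma rownorm_sqr n (A : 'M[C]_n) i : rownorm A i ^+ 2 = \sum_j `|A i j| ^+ 2.
Proof. by rewrite /rownorm sqrtCK. Qed.

Lemma maxprod_ge0 n k (f : 'I_n -> C) : (forall i, 0 <= f i) ->
  0 <= maxprod k f /\ (forall alpha : {set 'I_n}, #|alpha| = k ->
                         \prod_(i in alpha) f i <= maxprod k f).
Proof.
move=> f0.
have H (a : {set 'I_n}) : 0 <= \prod_(i in a) f i by apply: prodr_ge0 => i _.
have [h0 h1] := @bigmax_fin C _ (fun alpha : {set 'I_n} => #|alpha| == k)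
   (fun alpha : {set 'I_n} => \prod_(i in alpha) f i) (fun a _ => H a).
by split => // alpha /eqP; apply: h1.
Qed.

Lemma det_colsub_X k n (U : 'M[C]_(k, n)) (r : 'I_n -> C) f :
  \det (colsub (U *m diag_mx (\row_i r i)) f) = \det (colsub U f) * \prod_j r (f j).
Proof.
have -> : colsub (U *m diag_mx (\row_i r i)) f =
          colsub U f *m diag_mx (\row_j r (f j)).
  by apply/matrixP => i j; rewrite /colsub !mul_mx_diag !mxE.
by rewrite det_mulmx det_diag; congr (_ * _); apply: eq_bigr => j _; rewrite mxE.
Qed.

Lemma det_colsub_bound k n (U : 'M[C]_(k, n)) (r : 'I_n -> C) f :
  (forall i, 0 <= r i) ->
  `|\det (colsub (U *m diag_mx (\row_i r i)) f)| <=
     `|\det (colsub U f)| * maxprod k r.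
Proof.
move=> r0; have [M0 Mge] := maxprod_ge0 k r0.
rewrite det_colsub_X normrM.
case: (boolP (injectiveb f)) => [/injectiveP finj | /injectivePn [i1 [i2 ne12 e12]]].
  apply: ler_wpM2l; first exact: normr_ge0.
  rewrite ger0_norm; last by apply: prodr_ge0 => i _; exact: r0.
  have <- : \prod_(i in f @: setT) r i = \prod_j r (f j).
    by rewrite big_imset /=; [apply: eq_bigl => i; rewrite inE | move=> x y _ _; apply: finj].
  apply: Mge; rewrite card_imset ?cardsT ?card_ord //.
have -> : \det (colsub U f) = 0.
  rewrite -det_tr (determinant_alternate ne12) // => a; rewrite !mxE e12 //.
by rewrite normr0 !mul0r.
Qed.


Lemma det_bound k n (A : 'M[C]_n) (U : 'M[C]_(k, n)) (T : 'M[C]_k) :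
  (0 < k)%N -> U *m U^t* = 1%:M -> U *m A = T *m U ->
  `|\det T| ^+ 2 <= (n%:R / k%:R) ^+ k * maxprod k (rownorm A) ^+ 2.
Proof.
move=> k0 Uu UA.
set r := rownorm A; set M := maxprod k r.
have r0 : forall i, 0 <= r i by move=> i; exact: rownorm_ge0.
have [M0 _] := maxprod_ge0 k r0.
pose B0 : 'M[C]_n := \matrix_(i, j) (A i j / r i).
have AD : A = diag_mx (\row_i r i) *m B0.
  apply/matrixP => i j; rewrite mul_diag_mx !mxE.
  have [ri0|ri0] := eqVneq (r i) 0; last by rewrite mulrC divfK.
  rewrite ri0 mul0r.
  have hs : \sum_l `|A i l| ^+ 2 = 0 by rewrite -rownorm_sqr -/r ri0 expr0n.
  have := @psumr_eq0P _ _ predT (fun l => `|A i l| ^+ 2) (fun l _ => exprn_ge0 2 (normr_ge0 (A i l))) hs j isT.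
  by move/eqP; rewrite sqrf_eq0 normr_eq0 => /eqP.
have B0row : forall i, \sum_j `|B0 i j| ^+ 2 <= 1.
  move=> i; under eq_bigr do rewrite mxE normf_div expr_div_n (ger0_norm (r0 i)).
  rewrite -mulr_suml -rownorm_sqr -/r.
  have [ri0|ri0] := eqVneq (r i) 0; first by rewrite ri0 expr0n invr0 mulr0 ler01.
  by rewrite divff // expf_neq0.
set X := U *m diag_mx (\row_i r i).
set W := B0 *m U^t*.
have TXW : T = X *m W.
  by rewrite /X /W -[T]mulmx1 -Uu mulmxA -UA AD !mulmxA.
have hW : forall i, \sum_l `|W i l| ^+ 2 <= 1.
  move=> i; apply: le_trans (B0row i); have := bessel (row i B0) Uu.
  have e1 : forall l, (row i B0 *m U^t*) 0 l = W i l.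
    by move=> l; rewrite !mxE; apply: eq_bigr => j _; rewrite /row mxE.
  have e2 : forall j, row i B0 0 j = B0 i j by move=> j; rewrite /row mxE.
  by under eq_bigr do rewrite e1; under [X in _ <= X]eq_bigr do rewrite e2.
clearbody W.
set S := \sum_(f : {ffun 'I_k -> 'I_n}) `|\det (colsub U f)| * `|\det (rowsub' W f)|.
have h1 : k`!%:R * `|\det T| <= M * S.
  rewrite -[k`!%:R]ger0_norm ?ler0n // -normrM TXW cauchy_binet.
  rewrite /S mulr_sumr; apply: le_trans (ler_norm_sum _ _ _) _; apply: ler_sum => f _.
  rewrite normrM mulrA [M * _]mulrC; apply: ler_wpM2r; first exact: normr_ge0.
  exact: (det_colsub_bound U f r0).
have h2 := CS (fun f : {ffun 'I_k -> 'I_n} => normr_real (\det (colsub U f)))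
              (fun f => normr_real (\det (rowsub' W f))).
rewrite sum_sqr_det_U // sum_sqr_det_W -/S in h2.
have S0 : 0 <= S by rewrite sumr_ge0 // => f _; rewrite mulr_ge0.
have h3 : `|\det T| ^+ 2 <= M ^+ 2 * \det (W^t* *m W).
  have kf : 0 < k`!%:R ^+ 2 :> C by rewrite exprn_gt0 // ltr0n fact_gt0.
  rewrite -(ler_pM2l kf) -exprMn.
  apply: le_trans (_ : (M * S) ^+ 2 <= _).
    by apply: lerXn2r => //; rewrite nnegrE ?mulr_ge0 ?ler0n.
  rewrite exprMn; apply: le_trans (ler_wpM2l (exprn_ge0 2 M0) h2) _.
  by rewrite le_eqVlt; apply/orP; left; apply/eqP; rewrite /M; ring.
have h4 : \det (W^t* *m W) <= (n%:R / k%:R) ^+ k.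
  apply: le_trans (det_AGM W k0) _.
  have tr0 : 0 <= \tr (W^t* *m W).
    rewrite mxtrace_mulC /mxtrace sumr_ge0 // => i _; rewrite mxnorm2E.
    by rewrite sumr_ge0 // => l _; rewrite exprn_ge0.
  have kinv : 0 < k%:R^-1 :> C by rewrite invr_gt0 ltr0n.
  apply: lerXn2r; rewrite ?nnegrE ?mulr_ge0 ?ler0n ?invr_ge0 //.
  rewrite ler_pM2r // mxtrace_mulC /mxtrace.
  have -> : n%:R = \sum_(i < n) (1 : C) by rewrite sumr_const card_ord.
  by apply: ler_sum => i _; rewrite mxnorm2E.
apply: le_trans h3 _; rewrite mulrC; apply: ler_wpM2r => //.
exact: exprn_ge0.
Qed.


Lemma char_poly_tr n (A : 'M[C]_n) : char_poly A^T = char_poly A.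
Proof.
rewrite /char_poly -det_tr; congr (\det _); apply/matrixP => i j.
by rewrite !mxE eq_sym.
Qed.

Lemma row_case n k (B : 'M[C]_n) (s : seq C) : (0 < k)%N -> (k <= n)%N ->
  eigenseq B s ->
  `|\prod_(i < k) s`_i| <= sqrtC ((n%:R / k%:R) ^+ k) * maxprod k (rownorm B).
Proof.
move=> k0 kn eig.
have [P Pu [Gt Gd]] := ordered_schur eig.
set G := P *m B *m P^t* in Gt Gd.
have /is_trig_mxP Gz := Gt.
pose w := widen_ord kn.
pose U : 'M[C]_(k, n) := \matrix_(i, j) P (w i) j.
pose T : 'M[C]_k := \matrix_(i, j) G (w i) (w j).
have PtP : P^t* *m P = 1%:M.
  by have /unitarymxP := (etrans (trmxC_unitary P) Pu); rewrite trmxCK.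
have PB : P *m B = G *m P.
  by rewrite /G -[P *m B *m P^t* *m P]mulmxA PtP mulmx1.
have Uu : U *m U^t* = 1%:M.
  apply/matrixP => i j.
  have := congr1 (fun M : 'M_n => M (w i) (w j)) (unitarymxP Pu).
  rewrite !mxE => h; rewrite -[RHS]h; apply: eq_bigr => l _; rewrite !mxE //.
have UA : U *m B = T *m U.
  apply/matrixP => i j.
  have e : (U *m B) i j = (P *m B) (w i) j.
    by rewrite !mxE; apply: eq_bigr => l _; rewrite mxE.
  rewrite e PB mxE (bigID (fun l : 'I_n => (l < k)%N)) /= [X in _ + X]big1 ?addr0;
    last first.
    move=> l; rewrite -leqNgt => kl.
    by rewrite (Gz (w i) l (leq_trans (ltn_ord i) kl)) mul0r.
  rewrite (big_ord_narrow kn) [RHS]mxE; apply: eq_bigr => m _; rewrite !mxE //.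
have dT : \det T = \prod_(i < k) s`_i.
  have Tt : is_trig_mx T.
    by apply/is_trig_mxP => i j ij; rewrite mxE Gz.
  by rewrite (det_trig Tt); apply: eq_bigr => i _; rewrite mxE Gd.
have := det_bound k0 Uu UA; rewrite dT => h.
have [M0 _] := maxprod_ge0 k (@rownorm_ge0 n B).
have q0 : 0 <= (n%:R / k%:R) ^+ k :> C by rewrite exprn_ge0 ?divr_ge0 ?ler0n.
rewrite -(sqrCK (normr_ge0 _)) -[X in _ * X](sqrCK M0) -sqrtCM ?nnegrE ?exprn_ge0 //.
  rewrite ler_sqrtC // nnegrE; [exact: exprn_ge0 | by rewrite mulr_ge0 // exprn_ge0].
by rewrite divr_ge0 ?ler0n.
Qed.

End Main.


End Aux.
Import Aux.

Theorem theorem3p5 (C : numClosedFieldType) (n k : nat) (A : 'M[C]_n) (s : seq C) :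
  (1 <= k)%N -> (k <= n)%N ->
  eigenseq A s -> modulus_sorted s ->
  `|\prod_(i < k) s`_i| <=
    sqrtC ((n%:R / k%:R) ^+ k) *
      Order.min (maxprod k (colnorm A)) (maxprod k (rownorm A)).
Proof.
move=> k1 kn eig _.
have hr := row_case k1 kn eig.
have eigT : eigenseq A^T s by rewrite /eigenseq char_poly_tr.
have hc := row_case k1 kn eigT.
have e : maxprod k (rownorm A^T) = maxprod k (colnorm A).
  rewrite /maxprod; apply: eq_bigr => alpha _; apply: eq_bigr => i _.
  by rewrite /rownorm /colnorm; congr sqrtC; apply: eq_bigr => j _; rewrite mxE.
rewrite e in hc.
by rewrite /Order.min; case: ifP.
Qed.
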